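(* Let $n$ be a square-free integer with $n\neq 1$ and let $\lambda\geq 1$ be an integer. The action of the Hecke group $H(\lambda)$ on $\mathbb{Q}^*(\sqrt{n})$ has finitely many orbits if and only if $\lambda\in\{1,2\}$.
   Context: For a square-free integer $n\neq 1$, $\mathbb{Q}^*(\sqrt{n})=\left\{\frac{a+\sqrt{n}}{c}\;:\;a,c\in\mathbb{Z},\ c\neq 0,\ \frac{a^2-n}{c}\in\mathbb{Z}\right\}\subset\mathbb{Q}(\sqrt n)$ (inside $\mathbb{C}$ when $n<0$). For an integer $\lambda\geq 1$, $H(\lambda)$ is the group of linear fractional transformations generated by $x:z\mapsto -1/z$ and $w_\lambda:z\mapsto z+\lambda$; it acts on $\mathbb{Q}^*(\sqrt n)$ (both generators map $\mathbb{Q}^*(\sqrt n)$ into itself). *)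

(* Defs.v *)
(* Q(sqrt n) is realised inside the algebraic complex numbers algC. *)
From HB Require Import structures.
From mathcomp Require Import all_boot all_order all_algebra all_field.
Set Implicit Arguments. Unset Strict Implicit. Unset Printing Implicit Defensive.
Import Order.TTheory GRing.Theory Num.Theory.
Local Open Scope ring_scope.

(* n is square-free: the only integers whose square divides n are +-1
   (so in particular n <> 0). *)
Definition squarefree (n : int) : Prop :=
  forall d : int, (d * d %| n)%Z -> `|d| = 1.

(* Q^*(sqrt n) = { (a + sqrt n)/c : a, c in Z, c <> 0, c | a^2 - n },
   as a subset of algC (sqrtC n = i sqrt|n| when n < 0). *)
Definition Qstar (n : int) (z : algC) : Prop :=
  exists a c : int, c != 0 /\ (c %| a ^+ 2 - n)%Z /\
    z = (a%:~R + sqrtC (n%:~R)) / c%:~R.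

(* The generators of H(lambda) and the inverse of w_lambda
   (x is an involution). *)
Definition hx (z : algC) : algC := - z^-1.
Definition hw (lam : nat) (z : algC) : algC := z + lam%:R.
Definition hwinv (lam : nat) (z : algC) : algC := z - lam%:R.

Inductive Hecke (lam : nat) : (algC -> algC) -> Prop :=
  | Hecke_id : Hecke lam id
  | Hecke_x g : Hecke lam g -> Hecke lam (hx \o g)
  | Hecke_w g : Hecke lam g -> Hecke lam (hw lam \o g)
  | Hecke_winv g : Hecke lam g -> Hecke lam (hwinv lam \o g).

Definition same_orbit (lam : nat) (z w : algC) : Prop :=
  exists g, Hecke lam g /\ g z = w.

Definition finitely_many_orbits (n : int) (lam : nat) : Prop :=
  exists s : seq algC, (forall w, w \in s -> Qstar n w) /\
    forall z, Qstar n z -> exists2 w, w \in s & same_orbit lam z w.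

(* Main.v *)
Require Import Defs.
From mathcomp Require Import all_boot all_order all_algebra all_field.
From mathcomp Require Import zify ring lra.
From Stdlib Require Import Classical.
Import Order.TTheory GRing.Theory Num.Theory.
Set Implicit Arguments. Unset Strict Implicit. Unset Printing Implicit Defensive.
Local Open Scope ring_scope.

Lemma Hecke_comp lam g h : Hecke lam g -> Hecke lam h -> Hecke lam (g \o h).
Proof.
move=> Hg Hh; elim: Hg => [|g' _ IH|g' _ IH|g' _ IH].
- exact: Hh.
- exact: Hecke_x IH.
- exact: Hecke_w IH.
- exact: Hecke_winv IH.
Qed.

Lemma hxK y : hx (hx y) = y.
Proof. by rewrite /hx invrN invrK opprK. Qed.

Lemma Hecke_inv lam g : Hecke lam g -> exists h, Hecke lam h /\ forall y, h (g y) = y.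
Proof.
elim=> [|g' _ [h [Hh IH]]|g' _ [h [Hh IH]]|g' _ [h [Hh IH]]].
- by exists id; split; [exact: Hecke_id|].
- exists (h \o hx); split; first exact: Hecke_comp Hh (Hecke_x (Hecke_id lam)).
  by move=> y /=; rewrite hxK.
- exists (h \o hwinv lam); split; first exact: Hecke_comp Hh (Hecke_winv (Hecke_id lam)).
  by move=> y /=; rewrite /hwinv /hw addrK.
- exists (h \o hw lam); split; first exact: Hecke_comp Hh (Hecke_w (Hecke_id lam)).
  by move=> y /=; rewrite /hwinv /hw subrK.
Qed.

Inductive letter := LX | LW of int.

Fixpoint red (l : seq letter) : bool :=
  match l with
  | [::] => true
  | LX :: l' => (match l' with LX :: _ => false | _ => true end) && red l'
  | LW k :: l' => [&& k != 0, (match l' with LW _ :: _ => false | _ => true end) & red l']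
  end.

Fixpoint evalw (lam : nat) (l : seq letter) (z : algC) : algC :=
  match l with
  | [::] => z
  | LX :: l' => hx (evalw lam l' z)
  | LW k :: l' => evalw lam l' z + k%:~R * lam%:R
  end.

Lemma addW lam l (e : int) : red l -> exists l', red l' /\
  forall z, evalw lam l' z = evalw lam l z + e%:~R * lam%:R.
Proof.
case: l => [|[|k] l] /= Hr.
- case: (eqVneq e 0) => [->|e0].
    by exists [::]; split => // z /=; rewrite mul0r addr0.
  by exists [:: LW e]; split => //=; rewrite e0.
- case: (eqVneq e 0) => [->|e0].
    by exists (LX :: l); split => // z /=; rewrite mul0r addr0.
  by exists (LW e :: LX :: l); split => //=; rewrite e0.
- move/and3P: Hr => [k0 hd Hr].
  case: (eqVneq (k + e) 0) => [ke|ke].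
    exists l; split => // z /=.
    by rewrite -addrA -mulrDl -intrD ke mul0r addr0.
  exists (LW (k + e) :: l); split; first by rewrite /= ke hd.
  by move=> z /=; rewrite -addrA -mulrDl -intrD.
Qed.

Lemma Hecke_word lam g : Hecke lam g -> exists l, red l /\ forall z, g z = evalw lam l z.
Proof.
elim=> [|g' _ [l [Hr IH]]|g' _ [l [Hr IH]]|g' _ [l [Hr IH]]].
- by exists [::].
- case: l Hr IH => [|[|k] l] Hr IH.
  + by exists [:: LX]; split => // z /=; rewrite IH.
  + exists l; split; first by case/andP: Hr.
    by move=> z /=; rewrite IH /= hxK.
  + by exists (LX :: LW k :: l); split => // z /=; rewrite IH.
- have [l' [Hr' E]] := @addW lam l 1 Hr.
  by exists l'; split => // z /=; rewrite E -IH /hw mul1r.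
- have [l' [Hr' E]] := @addW lam l (-1) Hr.
  by exists l'; split => // z /=; rewrite E -IH /hwinv mulN1r.
Qed.
Lemma aux (x y t : int) : 0 <= x -> x <= y -> y <= t -> 1 <= y -> 1 <= y * t - x * x -> y <= y * t - x * x.
Proof.
move=> x0 xy yt y1 h.
have [e|lt] := eqVneq x y.
  subst x. have : 1 <= t - y by nia. nia.
have xy' : x <= y - 1 by lia.
have : x * x <= (y-1)*(y-1) by nia. nia.
Qed.
Lemma bound (a c b n : int) : `|a| <= `|c| -> `|c| <= `|b| -> c * b = a^+2 - n -> n != 0 -> c != 0 -> `|c| <= `|n|.
Proof. move=> ac cb e n0 c0.
have ea : a ^+ 2 = `|a| * `|a| by nia.
have ecb : `|c * b| = `|c| * `|b| by nia.
have [h|h] := lerP 0 (c * b).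
  have e2 : c * b = `|c| * `|b| by rewrite -ecb ger0_norm.
  have h4 : `|a| * `|a| <= `|c| * `|b| by nia.
  have := @aux `|a| `|c| `|b|. lia.
have e2 : c * b = - (`|c| * `|b|) by rewrite -ecb ltr0_norm ?opprK.
have h3 : `|c| <= `|c| * `|b| by nia.
lia.
Qed.
Definition half3 : algC := 3%:R / 2%:R.
Definition inP (y : algC) := `|y| < 1.
Definition inQ (lam : nat) (y : algC) :=
  exists k : int, k != 0 /\ `|y - k%:~R * lam%:R| < half3.
Definition inF (y : algC) := 1 < `|y| /\ `|y| < half3.

Lemma lt1h : 1 < half3.
Proof. by rewrite /half3 ltr_pdivlMr ?ltr0n // mul1r ltr_nat. Qed.

Lemma h3split : 3%:R - half3 = half3.
Proof. by rewrite /half3; field. Qed.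

Lemma nrm_klam (lam : nat) (k : int) : k != 0 -> (3 <= lam)%N ->
  3%:R <= `|k%:~R * lam%:R : algC|.
Proof.
move=> k0 l3.
have -> : k%:~R * lam%:R = (k * lam%:Z)%:~R :> algC by rewrite intrM.
rewrite [3%:R]pmulrn -intr_norm ler_int; lia.
Qed.

Lemma Q_gt lam y : (3 <= lam)%N -> inQ lam y -> half3 < `|y|.
Proof.
move=> l3 [k [k0 h]].
set t := k%:~R * lam%:R in h *.
have h1 : `|t| - `|t - y| <= `|y|.
  by have := lerB_dist t (t - y); rewrite (_ : t - (t - y) = y) //; ring.
rewrite -h3split; apply: lt_le_trans h1.
apply: ler_ltB; first exact: nrm_klam.
by rewrite distrC.
Qed.

Lemma hx_lt1 y : 1 < `|y| -> inP (hx y).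
Proof.
move=> h; rewrite /inP /hx normrN normfV invf_lt1 //.
exact: lt_trans h.
Qed.

Lemma pingpong lam : (3 <= lam)%N -> forall l, red l -> forall z, inF z ->
  match l with [::] => True | LX :: _ => inP (evalw lam l z)
  | LW _ :: _ => inQ lam (evalw lam l z) end.
Proof.
move=> l3; elim=> [//|a l IH] Hr z Fz.
case: a Hr => [|k] /= Hr.
- case/andP: Hr => hd Hr; have := IH Hr z Fz.
  case: l hd {IH Hr} => [|[|k] l] //= _.
    by move=> _; exact: hx_lt1 Fz.1.
  move=> Q; apply: hx_lt1; apply: lt_trans lt1h (Q_gt l3 Q).
- case/and3P: Hr => k0 hd Hr; have H := IH Hr z Fz.
  exists k; split => //; rewrite addrK.
  case: l hd H {IH Hr} => [|[|j] l] //= _ Hl.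
    exact: Fz.2.
  exact: lt_trans Hl lt1h.
Qed.

Lemma fixF lam l z : (3 <= lam)%N -> red l -> inF z -> inF (evalw lam l z) -> l = [::].
Proof.
move=> l3 Hr Fz; have := pingpong l3 Hr Fz.
case: l {Hr} => [//|[|k] l] /= H [F1 F2].
- by move: H; rewrite /inP => h; move: (lt_trans F1 h); rewrite ltxx.
- by move: H => /(Q_gt l3) h; move: (lt_trans F2 h); rewrite ltxx.
Qed.

Lemma orbitF lam z1 z2 w : (3 <= lam)%N -> inF z1 -> inF z2 ->
  same_orbit lam z1 w -> same_orbit lam z2 w -> z1 = z2.
Proof.
move=> l3 F1 F2 [g1 [H1 E1]] [g2 [H2 E2]].
have [h [Hh K]] := Hecke_inv H2.
have Hc := Hecke_comp Hh H1.
have [l [Hr E]] := Hecke_word Hc.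
have ez : (h \o g1) z1 = z2 by rewrite /= E1 -E2 K.
have F' : inF (evalw lam l z1) by rewrite -E; move: ez => /= ->.
have l0 := fixF l3 Hr F1 F'.
by have := E z1; rewrite ez l0 /= => ->.
Qed.

Definition sq (n : int) : algC := sqrtC (n%:~R).

Lemma sqK n : sq n ^+ 2 = n%:~R.
Proof. exact: sqrtCK. Qed.

Lemma nrm_sq n : `|sq n| ^+ 2 = `|n|%:~R.
Proof. by rewrite -normrX sqK intr_norm. Qed.

Lemma Re_le_norm (z : algC) : 'Re z <= `|z|.
Proof. by case: (leif_Re_Creal z). Qed.

Lemma Re_ge_nnorm (z : algC) : - `|z| <= 'Re z.
Proof. by rewrite lerNl -raddfN /= -normrN; exact: Re_le_norm. Qed.

Lemma nrm_sq_le n : n != 0 -> `|sq n| <= `|n|%:~R.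
Proof.
move=> n0.
have N1 : 1 <= `|n|%:~R :> algC.
  have h : (1:int) <= `|n| by lia.
  by move: h; rewrite -(ler_int algC).
have [h|h] := real_leP (normr_real (sq n)) (real1 algC).
  exact: le_trans h N1.
rewrite -nrm_sq expr2; apply: ltW; rewrite ltr_pMr //.
exact: lt_trans ltr01 h.
Qed.

Lemma Re_int (k : int) : 'Re (k%:~R : algC) = k%:~R.
Proof. by apply/Creal_ReP; rewrite realz. Qed.

Definition zm (n : int) (m : nat) : algC := 1 + (m%:~R - sq n)^-1.

Lemma zm_props n m : n != 0 -> (`|n| + 3 <= m)%N -> inF (zm n m) /\ Qstar n (zm n m).
Proof.
move=> n0 hm.
set s := sq n; set v := m%:~R - s; set w := m%:~R + s.
have hs := nrm_sq_le n0; rewrite -/s in hs.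
have m3 : `|n|%:~R + 3%:R <= m%:~R :> algC.
  by rewrite [3%:R]pmulrn -intrD ler_int; lia.
have Rev : 3%:R <= 'Re v.
  rewrite /v raddfB /= Re_int.
  apply: le_trans (_ : m%:~R - `|s| <= _); last by apply: lerB => //; exact: Re_le_norm.
  by rewrite lerBrDl; apply: le_trans m3; rewrite lerD2r.
have Rew : 0 < 'Re w.
  rewrite /w raddfD /= Re_int.
  apply: lt_le_trans (_ : m%:~R - `|s| <= _); last by rewrite lerD2l Re_ge_nnorm.
  rewrite subr_gt0; apply: le_lt_trans hs _; apply: lt_le_trans m3.
  by rewrite ltrDl ltr0n.
have v3 : 3%:R <= `|v| by apply: le_trans Rev (Re_le_norm v).
have vpos : 0 < `|v| by apply: lt_le_trans v3; rewrite ltr0n.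
have v0 : v != 0 by rewrite -normr_eq0 gt_eqF.
have w0 : w != 0 by apply/eqP => e; move: Rew; rewrite e raddf0 ltxx.
split; first split.
- apply: lt_le_trans (Re_le_norm _).
  rewrite /zm raddfD /= (Re_int 1) ltrDl ReV divr_gt0 //.
    by apply: lt_le_trans Rev; rewrite ltr0n.
  by rewrite exprn_gt0.
- apply: le_lt_trans (ler_normD _ _) _.
  rewrite normr1 normfV.
  have -> : half3 = 1 + 2%:R^-1 by rewrite /half3; field.
  rewrite ltrD2l ltf_pV2 ?posrE ?ltr0n //.
  by apply: lt_le_trans v3; rewrite ltr_nat.
- exists ((m%:Z) ^+ 2 - n + m), ((m%:Z) ^+ 2 - n); split; last split.
  + apply/eqP => e; have : (m%:Z) ^+ 2 = n by rewrite -[n]add0r -e subrK.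
    nia.
  + apply/dvdzP; exists ((m%:Z) ^+ 2 - n + 2 * m + 1); ring.
  + have ec : (((m%:Z) ^+ 2 - n)%:~R : algC) = v * w.
      rewrite rmorphB /= rmorphXn /= /v /w -(sqK n) -/s; ring.
    rewrite rmorphD /= ec /zm -/s -/v.
    rewrite (_ : sqrtC n%:~R = s) // -addrA (_ : m%:~R + s = w) //.
    by field; rewrite v0 w0.
Qed.

Lemma zm_inj n m1 m2 : zm n m1 = zm n m2 -> m1 = m2.
Proof.
rewrite /zm => /addrI /invr_inj /addIr /eqP.
by rewrite eqr_int => /eqP [].
Qed.

Lemma pig (R : nat -> algC -> Prop) :
  (forall m1 m2 w, R m1 w -> R m2 w -> m1 = m2) ->
  forall (l : seq algC) M, ~ (forall m, (M <= m)%N -> exists2 w, w \in l & R m w).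
Proof.
move=> U; elim=> [|w l IH] M H.
  by have [w] := H M (leqnn M).
case: (classic (exists m0, R m0 w)) => [[m0 R0]|nR].
- apply: (IH (maxn M m0.+1)) => m hm.
  have [w' /[!inE] /orP [/eqP ->|wl] Rw] := H m (leq_trans (leq_maxl _ _) hm).
    have := U _ _ _ Rw R0 => em; move: hm; rewrite em geq_max ltnn andbF //.
  by exists w'.
- apply: (IH M) => m hm.
  have [w' /[!inE] /orP [/eqP ew|wl] Rw] := H m hm.
    by case: nR; exists m; rewrite -ew.
  by exists w'.
Qed.

Lemma infinite_orbits n lam : n != 0 -> (3 <= lam)%N -> ~ finitely_many_orbits n lam.
Proof.
move=> n0 l3 [l [_ H]].
pose R m w := (`|n| + 3 <= m)%N /\ same_orbit lam (zm n m) w.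
apply: (@pig R _ l (`|n| + 3)%N).
  move=> m1 m2 w [h1 o1] [h2 o2].
  apply: (@zm_inj n); apply: (orbitF l3 _ _ o1 o2).
    exact: (zm_props n0 h1).1.
  exact: (zm_props n0 h2).1.
move=> m hm; have [w wl o] := H _ (zm_props n0 hm).2.
by exists w.
Qed.

Lemma sf_n0 n : squarefree n -> n != 0.
Proof. move=> sf; apply/eqP => e; have := sf 0; rewrite e mul0r dvdzz => /(_ isT). by []. Qed.

Lemma sq_neq n (a : int) : squarefree n -> n != 1 -> a ^+ 2 != n.
Proof.
move=> sf n1; apply/eqP => e.
have := sf a; rewrite -e expr2 dvdzz => /(_ isT) h.
move: n1; rewrite -e; nia.
Qed.

Lemma apos n (a : int) : squarefree n -> n != 1 -> a%:~R + sq n != 0.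
Proof.
move=> sf n1; apply/eqP => e.
have es : sq n = - a%:~R by apply/eqP; rewrite -addr_eq0 addrC e.
have := sqK n; rewrite es sqrrN -rmorphXn /= => /eqP; rewrite eqr_int => /eqP.
by move/eqP; rewrite (negbTE (sq_neq a sf n1)).
Qed.

Lemma shift_nat lam (k : nat) : exists g, Hecke lam g /\
  (forall z, g z = z + k%:R * lam%:R) /\ exists h, Hecke lam h /\ (forall z, h z = z - k%:R * lam%:R).
Proof.
elim: k => [|k [g [Hg [Eg [h [Hh Eh]]]]]].
  exists id; split; first exact: Hecke_id.
  split; first by move=> z; rewrite mul0r addr0.
  exists id; split; first exact: Hecke_id.
  by move=> z; rewrite mul0r subr0.
exists (hw lam \o g); split; first exact: Hecke_w.
split; first by move=> z; rewrite /= Eg /hw mulrSr mulrDl mul1r addrA.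
exists (hwinv lam \o h); split; first exact: Hecke_winv.
by move=> z; rewrite /= Eh /hwinv mulrSr mulrDl mul1r opprD addrA.
Qed.

Lemma shift lam (q : int) : exists g, Hecke lam g /\ forall z, g z = z + q%:~R * lam%:R.
Proof.
case: q => k.
  have [g [Hg [Eg _]]] := shift_nat lam k.
  by exists g; split => // z; rewrite Eg -pmulrn.
have [_ [_ [_ [h [Hh Eh]]]]] := shift_nat lam k.+1.
exists h; split => // z; by rewrite Eh NegzE mulrNz -pmulrn mulNr.
Qed.

Lemma choose_q (lam : nat) (a c : int) : (lam = 1 \/ lam = 2)%N -> c != 0 ->
  exists q : int, `|a + q * (lam%:Z * c)| <= `|c|.
Proof.
move=> [->|->] c0.
  exists (- (a %/ c)%Z); lia.
have [cp|cn] := ltrP 0 c.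
  have [h|h] := lerP (a %% (2%:Z * c))%Z c.
    exists (- (a %/ (2%:Z * c))%Z); lia.
  exists (- (a %/ (2%:Z * c))%Z - 1); lia.
have [h|h] := lerP (a %% (2%:Z * c))%Z (- c).
  exists (- (a %/ (2%:Z * c))%Z); lia.
exists (- (a %/ (2%:Z * c))%Z + 1); lia.
Qed.

Lemma hx_step n (a c b : int) : squarefree n -> n != 1 -> c != 0 -> b != 0 ->
  a ^+ 2 - n = c * b ->
  hx ((a%:~R + sq n) / c%:~R) = ((- a)%:~R + sq n) / b%:~R.
Proof.
move=> sf n1 c0 b0 e.
have ap := apos a sf n1.
have b0' : (b%:~R : algC) != 0 by rewrite intr_eq0.
have ec : (c%:~R : algC) = (a%:~R ^+ 2 - sq n ^+ 2) / b%:~R.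
  rewrite sqK -rmorphXn -rmorphB /= e rmorphM /= mulfK //.
rewrite /hx ec rmorphN /=.
have d0 : (a%:~R ^+ 2 - sq n ^+ 2 : algC) != 0.
  by rewrite sqK -rmorphXn -rmorphB /= e intr_eq0 mulf_neq0.
by field; rewrite ap b0' d0.
Qed.

Lemma shift_step n lam (a c q : int) : c != 0 ->
  (a%:~R + sq n) / c%:~R + q%:~R * lam%:R =
  ((a + q * (lam%:Z * c))%:~R + sq n) / c%:~R.
Proof.
move=> c0.
have c0' : (c%:~R : algC) != 0 by rewrite intr_eq0.
rewrite rmorphD rmorphM rmorphM /= -pmulrn.
by field.
Qed.

Lemma reduce n lam : squarefree n -> n != 1 -> (lam = 1 \/ lam = 2)%N ->
  forall k (a c : int), (absz c <= k)%N -> c != 0 -> (c %| a ^+ 2 - n)%Z ->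
  exists g (a' c' : int), Hecke lam g /\
    g ((a%:~R + sq n) / c%:~R) = (a'%:~R + sq n) / c'%:~R /\
    c' != 0 /\ (c' %| a' ^+ 2 - n)%Z /\ `|a'| <= `|n| /\ `|c'| <= `|n|.
Proof.
move=> sf n1 l12; elim=> [|k IH] a c hk c0 hd.
  by move: c0 hk; lia.
have [q hq] := choose_q a l12 c0.
set a1 := a + q * (lam%:Z * c) in hq.
have [g1 [H1 E1]] := shift lam q.
have hd1 : (c %| a1 ^+ 2 - n)%Z.
  case/dvdzP: hd => t ht; apply/dvdzP.
  exists (t + 2 * a * q * lam%:Z + q ^+ 2 * lam%:Z ^+ 2 * c).
  rewrite /a1; have -> : (a + q * (lam%:Z * c)) ^+ 2 - n =
    (a ^+ 2 - n) + (2 * a * q * lam%:Z + q ^+ 2 * lam%:Z ^+ 2 * c) * c by ring.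
  rewrite ht; ring.
set b := ((a1 ^+ 2 - n) %/ c)%Z.
have hb : a1 ^+ 2 - n = c * b by rewrite mulrC divzK.
have b0 : b != 0.
  apply/eqP => b0; move: hb; rewrite b0 mulr0 => /eqP; rewrite subr_eq0.
  by rewrite (negbTE (sq_neq a1 sf n1)).
have n0 := sf_n0 sf.
have [cb|bc] := lerP `|c| `|b|.
  exists g1, a1, c; split => //; split; first by rewrite E1 shift_step.
  split => //; split => //.
  have := bound hq cb (esym hb) n0 c0; lia.
have hk' : (absz b <= k)%N by move: hk bc; lia.
have hdb : (b %| (- a1) ^+ 2 - n)%Z by rewrite sqrrN hb dvdz_mull ?dvdzz.
have [g2 [a' [c' [H2 [E2 rest]]]]] := IH _ _ hk' b0 hdb.
exists (g2 \o ((hx \o id) \o g1)), a', c'; split.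
  exact: Hecke_comp H2 (Hecke_comp (Hecke_x (Hecke_id lam)) H1).
split => //=.
rewrite E1 shift_step // -E2; congr g2; exact: hx_step.
Qed.

Definition rng (n : int) : seq int :=
  [seq (i%:Z - (absz n)%:Z) | i <- iota 0 (absz n + absz n).+1].

Lemma mem_rng n (x : int) : `|x| <= `|n| -> x \in rng n.
Proof.
move=> h; apply/mapP; exists (absz (x + (absz n)%:Z)).
  by rewrite mem_iota; lia.
lia.
Qed.

Definition Lst (n : int) : seq algC :=
  [seq (p.1%:~R + sq n) / p.2%:~R | p <- [seq p <- [seq (x, y) | x <- rng n, y <- rng n]
     | (p.2 != 0) && (p.2 %| p.1 ^+ 2 - n)%Z]].

Theorem theorem1p4 (n : int) (lam : nat) :
  squarefree n -> n != 1 -> (1 <= lam)%N ->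
  (finitely_many_orbits n lam <-> lam = 1%N \/ lam = 2%N).
Proof.
move=> sf n1 l1; split.
  move=> fin; have [h|h] := leqP lam 2; first lia.
  by case: (infinite_orbits (sf_n0 sf) h fin).
move=> l12; exists (Lst n); split.
  move=> w /mapP [p]; rewrite mem_filter => /andP [/andP [p0 pd] _] ->.
  by exists p.1, p.2.
move=> z [a [c [c0 [hd ->]]]].
have [g [a' [c' [H [E [c0' [hd' [ha hc]]]]]]]] := reduce sf n1 l12 (leqnn _) c0 hd.
exists ((a'%:~R + sq n) / c'%:~R); last by exists g.
apply/mapP; exists (a', c') => //.
rewrite mem_filter; apply/andP; split.
  by apply/andP; split.
apply/allpairsP; exists (a', c'); split; [exact: mem_rng | exact: mem_rng | by []].
Qed.
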